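(* Let $n\geq 1$ and $d\geq 1$ be integers, and let $p(x)=p(x_1,\ldots,x_n)$ be any form (homogeneous polynomial) of degree $2d$ with real coefficients. Then there exists $\lambda\in\mathbb{R}$ such that the form $p(x)-\lambda\left(\sum_{i=1}^n x_i^2\right)^d$ is dsos.
   Context: Let $z(x,d)$ denote the vector of all monomials of degree exactly $d$ in the variables $x=(x_1,\ldots,x_n)$ (of length $\binom{n+d-1}{d}$). A real symmetric matrix $Q=(q_{ij})$ is diagonally dominant (dd) if $q_{ii}\geq \sum_{j\neq i}|q_{ij}|$ for all $i$. A form $f$ of degree $2d$ in $n$ variables is called diagonally-dominant-sum-of-squares (dsos) if there exists a diagonally dominant symmetric matrix $Q$ such that $f(x)=z(x,d)^T Q\, z(x,d)$ identically. *)

(* Defs.v *)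
From mathcomp Require Import all_boot all_order all_algebra.
From mathcomp Require Import mpoly.
Set Implicit Arguments. Unset Strict Implicit. Unset Printing Implicit Defensive.
Import Order.TTheory GRing.Theory Num.Theory.
Local Open Scope ring_scope.

(* Index type of the vector z(x,d): monomials (exponent vectors) in n
   variables of total degree exactly d (a finite type). *)
Definition dmon (n d : nat) : finType := {m : 'X_{1..n < d.+1} | mdeg m == d}.

Definition zmon (R : realFieldType) (n d : nat) (m : dmon n d) : {mpoly R[n]} :=
  'X_[val (val m)].

Definition symmetric_mx (R : realFieldType) (T : finType) (Q : T -> T -> R) :=
  forall i j, Q i j = Q j i.

Definition diag_dominant (R : realFieldType) (T : finType) (Q : T -> T -> R) :=
  forall i, \sum_(j | j != i) `|Q i j| <= Q i i.

Definition dsos (R : realFieldType) (n d : nat) (f : {mpoly R[n]}) :=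
  exists Q : dmon n d -> dmon n d -> R,
    [/\ symmetric_mx Q, diag_dominant Q &
        f = \sum_(i : dmon n d) \sum_(j : dmon n d) Q i j *: (zmon R i * zmon R j)].

(* Main.v *)
Require Import Defs.
From mathcomp Require Import all_boot all_order all_algebra.
From mathcomp Require Import mpoly.
From mathcomp Require Import lra.
Import Order.TTheory GRing.Theory Num.Theory.
Local Open Scope ring_scope.

Lemma mdeg_seq n (s : seq 'I_n) : mdeg (\sum_(x <- s) U_(x))%MM = size s.
Proof.
rewrite mdeg_sum. under eq_bigr do rewrite mdeg1. by rewrite sum1_size.
Qed.

Lemma mon_seq n (m : 'X_{1..n}) : exists s : seq 'I_n, m = (\sum_(x <- s) U_(x))%MM.
Proof.
move: {2}(mdeg m) (erefl (mdeg m)) => k; elim: k m => [|k IH] m hk.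
  move/eqP: hk; rewrite mdeg_eq0 => /eqP ->; exists [::]; by rewrite big_nil.
case: (pickP (fun i => 0 < m i)%N) => [i hi|h0]; last first.
  rewrite mdegE big1 in hk => // j _; move: (h0 j) => /=; by case: (m j).
have le : (U_(i) <= m)%MM.
  apply/mnm_lepP => j; rewrite mnm1E; case: eqP => [<-|] //=.
have em : m = ((m - U_(i)) + U_(i))%MM by rewrite submK.
have : mdeg (m - U_(i))%MM = k.
  move: hk; rewrite {1}em mdegD mdeg1 addn1; by case.
case/IH => s hs; exists (i :: s); rewrite big_cons {1}em hs addmC //.
Qed.

Arguments mon_seq {n}.
Lemma mon_split n (m : 'X_{1..n}) (s : seq 'I_n) d : m = (\sum_(x <- s) U_(x))%MM ->
  mdeg m = (2*d)%N -> exists u v, [/\ mdeg u = d, mdeg v = d & m = (u+v)%MM].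
Proof.
move=> hs hd; have hsz : size s = (2 * d)%N by rewrite -hd hs mdeg_seq.
exists (\sum_(x <- take d s) U_(x))%MM, (\sum_(x <- drop d s) U_(x))%MM.
split; rewrite ?mdeg_seq.
- by rewrite size_takel // hsz leq_pmull.
- by rewrite size_drop hsz mul2n -addnn addnK.
- by rewrite hs -big_cat cat_take_drop.
Qed.

Arguments mon_split {n m s d}.
Lemma lift_dmon n d (u : 'X_{1..n}) : mdeg u = d -> exists a : dmon n d, val (val a) = u.
Proof.
move=> hu; have h1 : (mdeg u < d.+1)%N by rewrite hu.
have h2 : mdeg (BMultinom h1) == d by rewrite /= hu.
by exists (exist _ (BMultinom h1) h2).
Qed.

Lemma dmon_deg n d (a : dmon n d) : mdeg (val (val a)) = d.
Proof. exact: eqP (valP a). Qed.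

Definition mf {n k} (f : {ffun 'I_k -> 'I_n}) : 'X_{1..n} := (\sum_(j < k) U_(f j))%MM.

Lemma Sexp (R : realFieldType) n k :
  (\sum_(i < n) 'X_i ^+ 2 : {mpoly R[n]}) ^+ k =
  \sum_(f : {ffun 'I_k -> 'I_n}) 'X_[(mf f + mf f)%MM].
Proof.
rewrite -{1}(card_ord k) -prodr_const bigA_distr_bigA; apply: eq_bigr => f _.
rewrite /mf -big_split /=.
rewrite (big_morph (@mpolyX n R) (@mpolyXD n R) (@mpolyX0 n R)).
by apply: eq_bigr => j _; rewrite mpolyXD expr2.
Qed.

Lemma Scoef (R : realFieldType) n k m :
  ((\sum_(i < n) 'X_i ^+ 2 : {mpoly R[n]}) ^+ k)@_m =
  \sum_(f : {ffun 'I_k -> 'I_n}) ((mf f + mf f)%MM == m)%:R.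
Proof.
rewrite Sexp raddf_sum; apply: eq_bigr => f _; exact: mcoeffX.
Qed.

Arguments lift_dmon {n d u}.
Arguments dmon_deg {n d}.
Definition ma {n d} (a : dmon n d) : 'X_{1..n} := val (val a).

Lemma ma_inj2 n d (a b : dmon n d) : (ma a + ma a)%MM = (ma b + ma b)%MM -> a = b.
Proof.
move/mnmP => h; apply/val_inj/val_inj/mnmP => i; move: (h i).
rewrite !mnmDE !addnn; exact: double_inj.
Qed.

Lemma mf_deg n k (f : {ffun 'I_k -> 'I_n}) : mdeg (mf f) = k.
Proof.
rewrite /mf mdeg_sum; under eq_bigr do rewrite mdeg1. by rewrite sum1_card card_ord.
Qed.

Arguments mf_deg {n k}.
Lemma S_supp (R : realFieldType) n d m :
  ((\sum_(i < n) 'X_i ^+ 2 : {mpoly R[n]}) ^+ d)@_m != 0 ->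
  exists a : dmon n d, m = (ma a + ma a)%MM.
Proof.
rewrite Scoef; case: (pickP (fun f : {ffun 'I_d -> 'I_n} => (mf f + mf f)%MM == m)) => [f hf|h0]; last first.
  by rewrite big1 ?eqxx // => f _; rewrite h0.
move=> _; case: (lift_dmon (mf_deg f)) => a ha; exists a; by rewrite /ma ha (eqP hf).
Qed.

Lemma S_pos (R : realFieldType) n d (hn : (1 <= n)%N) (a : dmon n d) :
  1 <= ((\sum_(i < n) 'X_i ^+ 2 : {mpoly R[n]}) ^+ d)@_(ma a + ma a)%MM.
Proof.
case: (mon_seq (ma a)) => s hs.
have hsz : size s = d by rewrite -(dmon_deg a) -/(ma a) hs mdeg_seq.
pose i0 : 'I_n := Ordinal hn.
pose f : {ffun 'I_d -> 'I_n} := [ffun j : 'I_d => nth i0 s j].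
have hf : mf f = ma a.
  rewrite hs (big_nth i0) hsz big_mkord /mf; apply: eq_bigr => j _; by rewrite ffunE.
rewrite Scoef (bigD1 f) //= hf eqxx lerDl; apply: sumr_ge0 => g _; exact: ler0n.
Qed.

Lemma sum_diag (R : realFieldType) (T : finType) (i : T) (x : T -> R) (y : T -> R) :
  \sum_j (if i == j then x i else 0) * y j = x i * y i.
Proof.
rewrite (bigD1 i) //= eqxx big1 ?addr0 // => j hj.
by rewrite eq_sym (negbTE hj) mul0r.
Qed.

Theorem theorem3 (R : realFieldType) (n d : nat) (hn : (1 <= n)%N) (hd : (1 <= d)%N)
    (p : {mpoly R[n]}) (hp : p \is (2 * d)%N.-homog) :
  exists lambda : R,
    dsos d (p - lambda *: (\sum_(i < n) 'X_i ^+ 2) ^+ d).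
Proof.
set S := (\sum_(i < n) 'X_i ^+ 2 : {mpoly R[n]}) ^+ d.
pose Np (m : 'X_{1..n}) := [pred ab : dmon n d * dmon n d | (ma ab.1 + ma ab.2)%MM == m].
pose N m := #|Np m|.
pose P (a b : dmon n d) : R := p@_(ma a + ma b)%MM / (N (ma a + ma b)%MM)%:R.
pose K := \sum_a \sum_b `|P a b|.
pose c (a : dmon n d) := S@_(ma a + ma a)%MM.
pose Q a b := P a b + K * (if a == b then c a else 0).
have K0 : 0 <= K by apply: sumr_ge0 => a _; apply: sumr_ge0 => b _.
exists (- K), Q; split.
- move=> a b; rewrite /Q /P addmC; have [->|hab] := eqVneq a b; first by [].
  done.
- move=> i.
  have e1 : \sum_(j | j != i) `|Q i j| = \sum_(j | j != i) `|P i j|.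
    apply: eq_bigr => j hj; by rewrite /Q eq_sym (negbTE hj) mulr0 addr0.
  have e2 : \sum_j `|P i j| <= K.
    rewrite /K [X in _ <= X](bigD1 i) //= lerDl.
    apply: sumr_ge0 => a _; apply: sumr_ge0 => b _; exact: normr_ge0.
  have e2' : \sum_j `|P i j| = `|P i i| + \sum_(j | j != i) `|P i j| by rewrite (bigD1 i).
  have e3 : 1 <= c i := @S_pos R n d hn i.
  have e4 : K <= K * c i by rewrite ler_peMr.
  have e5 := ler_norm (- P i i); rewrite normrN in e5.
  rewrite e1 /Q eqxx; lra.
- apply/mpolyP => m.
  have ez : forall i j, (Q i j *: (zmon R i * zmon R j))@_m = Q i j * ((ma i + ma j)%MM == m)%:R.
    by move=> i j; rewrite mcoeffZ /zmon -mpolyXD mcoeffX.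
  have eR : (\sum_i \sum_j Q i j *: (zmon R i * zmon R j))@_m = \sum_i \sum_j Q i j * ((ma i + ma j)%MM == m)%:R.
    rewrite raddf_sum; apply: eq_bigr => i _; rewrite raddf_sum; apply: eq_bigr => j _; exact: ez.
  rewrite eR mcoeffB mcoeffZ.
  have hC : \sum_i c i * ((ma i + ma i)%MM == m)%:R = S@_m.
    case: (pickP (fun a : dmon n d => (ma a + ma a)%MM == m)) => [a0 ha0|h0].
      rewrite (bigD1 a0) //= ha0 mulr1 big1 ?addr0 /c ?(eqP ha0) // => j hj.
      have hj' : (ma j + ma j)%MM != m.
        apply: contra hj => /eqP e; apply/eqP; apply: ma_inj2; by rewrite e (eqP ha0).
      by rewrite (negbTE hj') mulr0.
    rewrite big1; last by move=> i _; rewrite h0 mulr0.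
    apply/esym/eqP; apply/negPn/negP => /S_supp [a ha]; move: (h0 a); by rewrite ha eqxx.
  have hD : \sum_i \sum_j (K * (if i == j then c i else 0)) * ((ma i + ma j)%MM == m)%:R = K * S@_m.
    rewrite -hC mulr_sumr; apply: eq_bigr => i _.
    rewrite -(@sum_diag R _ i c (fun j => ((ma i + ma j)%MM == m)%:R)) mulr_sumr.
    by apply: eq_bigr => j _; rewrite mulrA.
  have hP : \sum_i \sum_j P i j * ((ma i + ma j)%MM == m)%:R = p@_m.
    rewrite pair_bigA /=.
    transitivity (\sum_(ab in Np m) p@_m / (N m)%:R).
      rewrite [RHS]big_mkcond /=; apply: eq_bigr => ab _.
      rewrite inE /=; case: eqP => [e|_]; by rewrite ?mulr1 ?mulr0 /P ?e.
    rewrite sumr_const; case: (posnP (N m)) => [h0|hpos].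
      rewrite /N in h0; rewrite h0 mulr0n.
      apply/esym/eqP; apply/negPn/negP => hnz.
      have hm : m \in msupp p by rewrite mcoeff_msupp.
      have hdeg : mdeg m = (2*d)%N := dhomog_mf hp hm.
      case: (mon_seq m) => s hs; case: (mon_split hs hdeg) => u [v [hu hv e]].
      case: (lift_dmon hu) => a ha; case: (lift_dmon hv) => b hb.
      have : (a, b) \in Np m by rewrite inE /= /ma ha hb e.
      by rewrite (card0_eq h0).
    rewrite -[LHS](mulr_natr (p@_m / (N m)%:R)) divfK // pnatr_eq0 -lt0n //.
  have -> : \sum_i \sum_j Q i j * ((ma i + ma j)%MM == m)%:R =
     \sum_i \sum_j P i j * ((ma i + ma j)%MM == m)%:R +
     \sum_i \sum_j (K * (if i == j then c i else 0)) * ((ma i + ma j)%MM == m)%:R.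
    rewrite -big_split; apply: eq_bigr => i _; rewrite -big_split; apply: eq_bigr => j _.
    by rewrite /Q mulrDl.
  by rewrite hP hD mulNr opprK.
Qed.
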